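(* Let $k\ge2$, $IS\in\{\Box,\blacksquare\}^k$, and let $\tau$ be a correct compositional translation from $\mathrm{SYNCSIMPLE}$ into $\mathrm{LOCKSIMPLE}_{k,IS}$. Then there is some $i$ such that $\tau(!)$ has a blocking subsequence of the form $RP_i$ or $P_iRP_i$, where $R$ contains neither $P_i$ nor $T_i$. The same holds for $\tau(?)$.
   Context: $\mathrm{SYNCSIMPLE}$: subprocesses $\mathcal{U} ::= \checkmark \mid 0 \mid\, !\mathcal{U} \mid\, ?\mathcal{U}$; processes are finite parallel compositions ($\mid$ associative, commutative, $0$ a unit). Reduction: $!\mathcal{U}_1\mid ?\mathcal{U}_2\mid \mathcal{P}\to \mathcal{U}_1\mid\mathcal{U}_2\mid\mathcal{P}$. Successful: of form $\checkmark\mid\mathcal{P}$; may-convergent: reduces to a successful process; must-convergent: every reachable process is may-convergent. $\mathrm{LOCKSIMPLE}_{k,IS}$ ($IS\in\{\Box,\blacksquare\}^k$, $\Box$ empty, $\blacksquare$ full): subprocesses are words over $\{P_1,T_1,\dots,P_k,T_k\}$ followed by $0$ or $\checkmark$; states $(\mathcal{P},C)$ reduce by $(P_i\mathcal{U}\mid\mathcal{P},C)\to(\mathcal{U}\mid\mathcal{P},C[C_i:=\blacksquare])$ only if $C_i=\Box$, and $(T_i\mathcal{U}\mid\mathcal{P},C)\to(\mathcal{U}\mid\mathcal{P},C[C_i:=\Box])$ always. Success = process contains $\checkmark$; a process $\mathcal{P}$ is may/must-convergent iff the state $(\mathcal{P},IS)$ is. A compositional translation $\tau$ is given by words $\tau(!),\tau(?)$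 with $\tau(0)=0$, $\tau(\checkmark)=\checkmark$, $\tau(!\mathcal{U})=\tau(!)\tau(\mathcal{U})$, $\tau(?\mathcal{U})=\tau(?)\tau(\mathcal{U})$, $\tau$ commuting with $\mid$; correct = preserves and reflects may- and must-convergence. Blocking prefix of a word $S$: a prefix of $S$ of the form $R_1P_iR_2P_i$ with $R_2$ containing no $P_i,T_i$, or of the form $R_1P_i$ with $R_1$ containing no $P_i,T_i$, such that executing $S$ alone as a single subprocess starting with store $IS$ gets stuck exactly before this last $P_i$. The suffix $P_iR_2P_i$, resp. $R_1P_i$, is then called a blocking subsequence of $S$. *)

(* Defs.v *)
From mathcomp Require Import all_boot.
From Stdlib Require Import Relations.
From Stdlib Require List.
Set Implicit Arguments. Unset Strict Implicit. Unset Printing Implicit Defensive.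

Inductive ssub : Type :=
  | SCheck : ssub
  | SZero : ssub
  | SSend : ssub -> ssub
  | SRecv : ssub -> ssub.

(** A process is a finite parallel composition, represented as a list of
    subprocesses (order is irrelevant for all notions below). *)
Definition sproc := seq ssub.

Definition sstep (P Q : sproc) : Prop :=
  exists (A B C : sproc) (x y x' y' : ssub),
    P = A ++ x :: B ++ y :: C /\ Q = A ++ x' :: B ++ y' :: C /\
    ((x = SSend x' /\ y = SRecv y') \/ (x = SRecv x' /\ y = SSend y')).

Definition sreach : relation sproc := clos_refl_trans sproc sstep.
Definition ssuccess (P : sproc) : Prop := List.In SCheck P.
Definition smay (P : sproc) : Prop := exists Q, sreach P Q /\ ssuccess Q.
Definition smust (P : sproc) : Prop := forall Q, sreach P Q -> smay Q.

Inductive letter (k : nat) : Type :=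
  | LP : 'I_k -> letter k
  | LT : 'I_k -> letter k.

Definition lock_of k (l : letter k) : 'I_k :=
  match l with LP i => i | LT i => i end.

(** A subprocess: a word followed by 0 (false) or checkmark (true). *)
Definition lsub k := (seq (letter k) * bool)%type.
Definition lproc k := seq (lsub k).
(** Store: true = full (black square), false = empty (white square). *)
Definition store k := {ffun 'I_k -> bool}.
Definition upd k (C : store k) (i : 'I_k) (b : bool) : store k :=
  [ffun j => if j == i then b else C j].

Definition lstate k := (lproc k * store k)%type.

Definition lstep k (s t : lstate k) : Prop :=
  exists (A B : lproc k) (l : letter k) (w : seq (letter k)) (b : bool),
    s.1 = A ++ (l :: w, b) :: B /\ t.1 = A ++ (w, b) :: B /\
    match l with
    | LP i => s.2 i = false /\ t.2 = upd s.2 i true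
    | LT i => t.2 = upd s.2 i false
    end.

Definition lreach k : relation (lstate k) := clos_refl_trans (lstate k) (@lstep k).
Definition lsuccess k (s : lstate k) : Prop := List.In ([::], true) s.1.
Definition lmay_state k (s : lstate k) : Prop :=
  exists t, lreach s t /\ lsuccess t.
Definition lmust_state k (s : lstate k) : Prop :=
  forall t, lreach s t -> lmay_state t.
Definition lmay k (IS : store k) (P : lproc k) := lmay_state (P, IS).
Definition lmust k (IS : store k) (P : lproc k) := lmust_state (P, IS).

(** * Compositional translations, given by the words tau(!) and tau(?) *)
Fixpoint tau_sub k (ws wr : seq (letter k)) (u : ssub) : lsub k :=
  match u with
  | SCheck => ([::], true)
  | SZero => ([::], false)
  | SSend u' => (ws ++ (tau_sub ws wr u').1, (tau_sub ws wr u').2)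
  | SRecv u' => (wr ++ (tau_sub ws wr u').1, (tau_sub ws wr u').2)
  end.

Definition tau_proc k (ws wr : seq (letter k)) (P : sproc) : lproc k :=
  map (tau_sub ws wr) P.

Definition correct_translation k (IS : store k) (ws wr : seq (letter k)) : Prop :=
  forall P : sproc,
    (smay P <-> lmay IS (tau_proc ws wr P)) /\
    (smust P <-> lmust IS (tau_proc ws wr P)).

Fixpoint run k (C : store k) (w : seq (letter k)) : option (store k) :=
  match w with
  | [::] => Some C
  | LP i :: w' => if C i then None else run (upd C i true) w'
  | LT i :: w' => run (upd C i false) w'
  end.

Definition free_of k (i : 'I_k) (R : seq (letter k)) : bool :=
  all (fun l => lock_of l != i) R.

(** [pre] is a blocking prefix of [S] (starting with store [IS]) whose last
    letter is [P_i]: [pre] is a prefix of [S] of the form R1 P_i R2 P_i with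
    R2 free of P_i,T_i, or R1 P_i with R1 free of P_i,T_i, and running [S]
    alone gets stuck exactly before this last P_i, i.e. the part before it
    executes without blocking and leaves lock i full. *)
Definition blocking_prefix k (IS : store k) (S : seq (letter k)) (i : 'I_k)
    (pre : seq (letter k)) : Prop :=
  exists body : seq (letter k),
    pre = rcons body (LP i) /\ (exists rest, S = pre ++ rest) /\
    ((exists R1 R2, body = R1 ++ LP i :: R2 /\ free_of i R2) \/ free_of i body) /\
    exists C, run IS body = Some C /\ C i = true.

(* Main.v *)
Require Import Defs.
From mathcomp Require Import all_boot.
From Stdlib Require Import Relations Lia.
From mathcomp Require Import zify.
From Stdlib Require List.

Lemma single_reach (x : ssub) P Q : sreach P Q -> P = [:: x] -> Q = [:: x].
Proof.
elim => [p q Hst | p | p q r _ IH1 _ IH2] Hp.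
- case: Hst => [A [B [C [x0 [y [x' [y' [E _]]]]]]]].
  subst p; have := f_equal size E; rewrite /= !size_cat /= !size_cat /= => Hs; lia.
- by [].
- by apply: IH2; apply: IH1.
Qed.

Lemma not_smay1 x : x <> SCheck -> ~ smay [:: x].
Proof.
move=> Hx [Q [HR HS]]; rewrite (@single_reach x _ _ HR erefl) in HS.
by case: HS => // -[].
Qed.

Lemma run_reach k (w : seq (letter k)) C0 C :
  run C0 w = Some C -> lreach ([:: (w, true)], C0) ([:: ([::], true)], C).
Proof.
elim: w C0 => [|l w IH] C0 /=.
- by case=> ->; apply: rt_refl.
- case: l => i.
  + case E: (C0 i) => // H.
    apply: rt_trans (IH _ H); apply: rt_step.
    exists [::], [::], (LP i), w, true; split=> //; split=> //.
  + move=> H; apply: rt_trans (IH _ H); apply: rt_step.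
    exists [::], [::], (LT i), w, true; split=> //.
Qed.

Lemma run_none k (w : seq (letter k)) C0 : run C0 w = None ->
  exists body i rest C, w = rcons body (LP i) ++ rest /\ run C0 body = Some C /\ C i = true.
Proof.
elim: w C0 => [|l w IH] C0 //=.
case: l => i.
- case E: (C0 i) => H.
  + by exists [::], i, w, C0.
  + have [b [j [r [C [-> [H1 H2]]]]]] := IH _ H.
    by exists (LP i :: b), j, r, C; rewrite /= E.
- move=> H; have [b [j [r [C [-> [H1 H2]]]]]] := IH _ H.
  by exists (LT i :: b), j, r, C.
Qed.

Lemma shape k (body : seq (letter k)) C0 C i : run C0 body = Some C -> C i = true ->
  (exists R1 R2, body = R1 ++ LP i :: R2 /\ free_of i R2) \/ free_of i body.
Proof.
elim: body C0 => [|l b IH] C0 /=; first by right.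
case: l => j.
- case: (C0 j) => // H Hi.
  case: (IH _ H Hi) => [[R1 [R2 [-> HR]]]|Hf].
  + by left; exists (LP j :: R1), R2.
  + case: (eqVneq j i) => [eji|ne].
    * by subst j; left; exists [::], b.
    * by right; rewrite /= ?ne Hf.
- move=> H Hi.
  case: (IH _ H Hi) => [[R1 [R2 [-> HR]]]|Hf].
  + by left; exists (LT j :: R1), R2.
  + case: (eqVneq j i) => [ej|ne].
    * exfalso; subst j.
      (* lock i emptied, and b free of i keeps it empty *)
      suff: C i = false by rewrite Hi.
      have: (upd C0 i false) i = false by rewrite /upd ffunE eqxx.
      move: H Hf; move: (upd C0 i false) => D.
      elim: b D {IH} => [|l b IHb] D /=; first by case=> ->.
      case: l => m /=.
      * case: (D m) => // H /andP [nm Hf] Di; apply: (IHb _ H Hf).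
        by rewrite /upd ffunE eq_sym (negbTE nm).
      * move=> H /andP [nm Hf] Di; apply: (IHb _ H Hf).
        by rewrite /upd ffunE eq_sym (negbTE nm).
    * by right; rewrite /= ?ne Hf.
Qed.

Lemma blocks k (IS : store k) (w : seq (letter k)) :
  ~ lmay IS [:: (w, true)] -> exists (i : 'I_k) (pre : seq (letter k)), blocking_prefix IS w i pre.
Proof.
move=> Hn; case E: (run IS w) => [C|].
- by exfalso; apply: Hn; exists ([:: ([::], true)], C); split;
    [apply: run_reach | left].
- have [body [i [rest [C [-> [H1 H2]]]]]] := run_none _ _ _ E.
  exists i, (rcons body (LP i)), body; split=> //; split; first by exists rest.
  split; first exact: (shape _ _ _ _ _ H1 H2).
  by exists C.
Qed.

Theorem lemma4p4 (k : nat) (hk : 2 <= k) (IS : store k) (ws wr : seq (letter k)) :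
  correct_translation IS ws wr ->
  (exists (i : 'I_k) (pre : seq (letter k)), blocking_prefix IS ws i pre) /\
  (exists (i : 'I_k) (pre : seq (letter k)), blocking_prefix IS wr i pre).
Proof.
move=> Hc; split; apply: blocks => Hm.
- have [[_ H] _] := Hc [:: SSend SCheck].
  apply: (@not_smay1 (SSend SCheck)) => //; apply: H.
  by rewrite /tau_proc /= cats0.
- have [[_ H] _] := Hc [:: SRecv SCheck].
  apply: (@not_smay1 (SRecv SCheck)) => //; apply: H.
  by rewrite /tau_proc /= cats0.
Qed.
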